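(* Let $G=K_{n_1}\,\square\,\cdots\,\square\, K_{n_d}$, where each $n_j\geq 2$ is even and $d\geq 2$ is odd. Then for every vertex $u$ of $G$, $\uparrow^{2}G$ has Laplacian perfect state transfer between $(0,u)$ and $(1,u)$. In particular, if $q\geq 2$ is even (and $d\geq2$ is odd), then for every vertex $u$ of the Hamming graph $H(d,q)$, $\uparrow^{2}H(d,q)$ has Laplacian perfect state transfer between $(0,u)$ and $(1,u)$.
   Context: All graphs are simple, undirected and unweighted. $K_n$ is the complete graph on $n$ vertices. The Cartesian product $G\,\square\, H$ of graphs on $m$ and $n$ vertices is the graph with Laplacian $L(G)\otimes I_n+I_m\otimes L(H)$, where $L=D-A$. The Hamming graph $H(d,q)$ is the Cartesian product of $d$ copies of $K_q$. The blow-up $\uparrow^{2}G$ has vertex set $\mathbb{Z}_2\times V(G)$, with $(l,u)\sim(m,v)$ iff $u\sim v$ in $G$. A graph with Laplacian $L$ has Laplacian perfect state transfer between $a,b$ if $\exp(i\tau L)\mathbf{e}_a=\gamma\mathbf{e}_b$ for some $\tau>0$, $\gamma\in\mathbb{C}$. *)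

(* Defs.v *)
From HB Require Import structures.
From mathcomp Require Import all_boot all_order all_algebra.
From mathcomp Require Import all_classical all_reals all_analysis.
From mathcomp Require Import complex.
Set Implicit Arguments. Unset Strict Implicit. Unset Printing Implicit Defensive.
Import Order.TTheory GRing.Theory Num.Theory.
Import numFieldNormedType.Exports.
Local Open Scope ring_scope.
Local Open Scope complex_scope.
Local Open Scope classical_set_scope.

Record graph := Graph {
  vert : finType;
  adj : rel vert;
  adj_sym : symmetric adj;
  adj_irr : irreflexive adj }.

Definition Kadj (n : nat) : rel 'I_n := fun x y => x != y.
Lemma Kadj_sym n : symmetric (@Kadj n).
Proof. by move=> x y; rewrite /Kadj eq_sym. Qed.
Lemma Kadj_irr n : irreflexive (@Kadj n).
Proof. by move=> x; rewrite /Kadj eqxx. Qed.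
Definition K (n : nat) : graph := Graph (@Kadj_sym n) (@Kadj_irr n).

Definition cart_adj (G H : graph) : rel (vert G * vert H) :=
  fun x y => (adj x.1 y.1 && (x.2 == y.2)) || ((x.1 == y.1) && adj x.2 y.2).
Lemma cart_adj_sym G H : symmetric (@cart_adj G H).
Proof.
by move=> x y; rewrite /cart_adj adj_sym [adj x.2 _]adj_sym eq_sym [_.1 == _]eq_sym.
Qed.
Lemma cart_adj_irr G H : irreflexive (@cart_adj G H).
Proof. by move=> x; rewrite /cart_adj !adj_irr /= andbF. Qed.
Definition cart (G H : graph) : graph := Graph (@cart_adj_sym G H) (@cart_adj_irr G H).

Fixpoint prodK (n : nat) (s : seq nat) : graph :=
  match s with
  | [::] => K n
  | m :: s' => cart (K n) (prodK m s')
  end.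

(* K_{n_1} \square ... \square K_{n_d} for the list ns = [:: n_1; ...; n_d], d >= 1 *)
Definition cartK (ns : seq nat) : graph := prodK (head 0%N ns) (behead ns).

Definition hamming (d q : nat) : graph := cartK (nseq d q).

Definition blow_adj (G : graph) : rel ('I_2 * vert G) := fun x y => adj x.2 y.2.
Lemma blow_adj_sym G : symmetric (@blow_adj G).
Proof. by move=> x y; rewrite /blow_adj adj_sym. Qed.
Lemma blow_adj_irr G : irreflexive (@blow_adj G).
Proof. by move=> x; rewrite /blow_adj adj_irr. Qed.
Definition blowup2 (G : graph) : graph := Graph (@blow_adj_sym G) (@blow_adj_irr G).

Definition laplacian (R : realType) (G : graph) : 'M[R[i]^o]_#|vert G| :=
  \matrix_(i, j)
    ((if i == j then (#|[set y | adj (enum_val i) y]|)%:R else 0)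
      - (adj (enum_val i) (enum_val j))%:R).

Definition evec (R : realType) (G : graph) (a : vert G) : 'cV[R[i]^o]_#|vert G| :=
  delta_mx (enum_rank a) 0.

(* matrix power A^k (for square matrices of any size, including 0) *)
Definition mxpow (R : realType) (n : nat) (A : 'M[R[i]^o]_n) (k : nat) : 'M[R[i]^o]_n :=
  iter k (fun B => A *m B) 1%:M.

Definition is_mxexp (R : realType) (n : nat) (A M : 'M[R[i]^o]_n) : Prop :=
  (fun N : nat => \sum_(k < N) (k`!%:R)^-1 *: mxpow A k) @ \oo --> M.

Definition lap_pst (R : realType) (G : graph) (a b : vert G) : Prop :=
  exists tau : R, (0 < tau) /\ exists (gamma : R[i]^o) (M : 'M[R[i]^o]_#|vert G|),
    is_mxexp ((('i * tau%:C) : R[i]^o) *: laplacian R G) M /\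
    M *m evec R a = gamma *: evec R b.

(* Main.v *)
Require Import Defs.
From HB Require Import structures.
From mathcomp Require Import all_boot all_order all_algebra.
From mathcomp Require Import all_classical all_reals all_analysis.
From mathcomp Require Import complex.
From mathcomp Require Import ring lra.
Set Implicit Arguments. Unset Strict Implicit. Unset Printing Implicit Defensive.
Import Order.TTheory GRing.Theory Num.Theory.
Import numFieldNormedType.Exports.
Local Open Scope ring_scope.
Local Open Scope complex_scope.
Local Open Scope classical_set_scope.



Section Analysis.
Variable R : realType.

Lemma mx_cvg_entry (n : nat) (f : nat -> 'M[R[i]^o]_n) (M : 'M[R[i]^o]_n) :
  (forall i j, (fun N => f N i j) @ \oo --> M i j) -> f @ \oo --> M.
Proof.
move=> H; apply/cvg_mx_entourageP => A entA.
have H2 : forall p : 'I_n * 'I_n,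
    \forall N \near \oo, (M p.1 p.2, f N p.1 p.2) \in A.
  move=> [i j]; have := (cvg_entourageP _ _).1 (H i j) A entA.
  move=> HH; near=> N; rewrite inE; near: N; exact: HH.
have HH : \forall N \near \oo, forall p : 'I_n * 'I_n, (M p.1 p.2, f N p.1 p.2) \in A.
  by apply: filter_forall.
rewrite /= near_simpl; apply: filterS HH => N HN i j; exact: (HN (i, j)).
Unshelve. all: by end_near.
Qed.

Lemma cvg_Complex (a b : nat -> R) (A B : R) :
  a @ \oo --> A -> b @ \oo --> B ->
  (fun N => (a N +i* b N : R[i]^o)) @ \oo --> (A +i* B : R[i]^o).
Proof.
move=> /cvgrPdist_lt Ha /cvgrPdist_lt Hb.
apply/cvgrPdist_lt => e e0.
move: e0; rewrite ltcE.
case: e => er ei /= /andP[/eqP -> er0].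
have er20 : 0 < er / 2 by rewrite divr_gt0.
near=> N.
have h1 : `|A - a N| < er / 2 by near: N; exact: Ha.
have h2 : `|B - b N| < er / 2 by near: N; exact: Hb.
rewrite normc_def /= ltcR.
rewrite -[X in _ < X]ger0_norm ?ltW // -sqrtr_sqr ltr_sqrt; last first.
  by rewrite exprn_gt0.
move: h1 h2; set x := A - a N; set y := B - b N => h1 h2.
have [hx1 hx2] : - (er / 2) < x /\ x < er / 2.
  by move: h1; rewrite ltr_norml => /andP[].
have [hy1 hy2] : - (er / 2) < y /\ y < er / 2.
  by move: h2; rewrite ltr_norml => /andP[].
clearbody x y; nra.
Unshelve. all: by end_near.
Qed.

Lemma exp_term (t : R) k :
  ((k`!%:R)^-1 * ('i * t%:C) ^+ k : R[i]) = cos_coeff t k +i* sin_coeff t k.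
Proof.
have Ei : ('i : R[i]) ^+ k = ((-1) ^+ (k./2))%:C * 'i ^+ (odd k).
  rewrite -{1}(odd_double_half k) exprD -muln2 mulnC exprM sqr_i mulrC.
  by rewrite rmorphXn rmorphN1.
rewrite exprMn Ei -rmorphXn -(rmorph_nat (real_complex R)) -fmorphV.
rewrite /cos_coeff /sin_coeff /=.
case hk: (odd k) => /=.
  have -> : k.-1./2 = k./2.
    by rewrite -{1}(odd_double_half k) hk /= doubleK.
  by rewrite expr1 -exprnP; simpc; congr (_ *i); rewrite mulrC.
by rewrite -exprnP; simpc; rewrite mulrC.
Qed.

Definition expS (z : R[i]) N : R[i]^o := \sum_(k < N) (k`!%:R)^-1 * z ^+ k.

Lemma expS_cvg t :
  (fun N => expS ('i * t%:C) N) @ \oo --> (cos t +i* sin t : R[i]^o).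
Proof.
have -> : (fun N => expS ('i * t%:C) N) =
    (fun N => series (cos_coeff t) N +i* series (sin_coeff t) N).
  apply/funext => N; rewrite /expS /series /=.
  elim: N => [|N IH]; first by rewrite big_ord0 !big_geq.
  by rewrite big_ord_recr /= IH !big_nat_recr //= exp_term.
apply: cvg_Complex.
  by rewrite cos.unlock; exact: is_cvg_series_cos_coeff.
by rewrite sin.unlock; exact: is_cvg_series_sin_coeff.
Qed.
End Analysis.



Section Kernels.
Variable R : realType.
Variable V : finType.
Implicit Types f g : V -> V -> R[i].

Definition kmx f : 'M[R[i]^o]_#|V| := \matrix_(i, j) f (enum_val i) (enum_val j).
Definition kmul f g x y : R[i] := \sum_z f x z * g z y.
Definition kdelta (x y : V) : R[i] := (x == y)%:R.

Lemma kmx_mul f g : kmx f *m kmx g = kmx (kmul f g).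
Proof.
apply/matrixP => i j; rewrite !mxE /kmul.
rewrite [RHS](reindex _ (onW_bij _ (enum_val_bij V))) /=.
by apply: eq_bigr => k _; rewrite !mxE.
Qed.

Lemma kmx_delta : kmx kdelta = 1%:M.
Proof. by apply/matrixP => i j; rewrite !mxE /kdelta (inj_eq enum_val_inj). Qed.

Lemma sum_deltal (F : V -> R[i]) x : \sum_z kdelta x z * F z = F x.
Proof.
rewrite (bigD1 x) //= /kdelta eqxx mul1r big1 ?addr0 // => z /negbTE.
by rewrite eq_sym => ->; rewrite mul0r.
Qed.

Lemma sum_deltar (F : V -> R[i]) y : \sum_z F z * kdelta z y = F y.
Proof.
rewrite (bigD1 y) //= /kdelta eqxx mulr1 big1 ?addr0 // => z /negbTE.
by move=> ->; rewrite mulr0.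
Qed.

Definition specfam (I : finType) (P : I -> V -> V -> R[i]) :=
  (forall a b x y, kmul (P a) (P b) x y = (a == b)%:R * P a x y) /\
  (forall x y, \sum_a P a x y = kdelta x y).

Lemma kpow (I : finType) (P : I -> V -> V -> R[i]) (lam : I -> R[i]) k :
  specfam P ->
  mxpow (kmx (fun x y => \sum_a lam a * P a x y)) k =
  kmx (fun x y => \sum_a lam a ^+ k * P a x y).
Proof.
move=> [Porth Psum]; elim: k => [|k IH].
  rewrite /mxpow /= -kmx_delta; congr kmx; apply/funext => x; apply/funext => y.
  by rewrite -Psum; apply: eq_bigr => a _; rewrite expr0 mul1r.
rewrite /mxpow iterS -/(mxpow _ k) IH kmx_mul; congr kmx.
apply/funext => x; apply/funext => y; rewrite /kmul.
under eq_bigr do rewrite mulr_suml.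
rewrite exchange_big /=; apply: eq_bigr => a _.
under eq_bigr do rewrite mulr_sumr.
rewrite exchange_big /=.
under eq_bigr => b _.
  under eq_bigr do rewrite mulrACA.
  rewrite -mulr_sumr -/(kmul (P a) (P b) x y) Porth.
  over.
rewrite (bigD1 a) //= eqxx big1 ?addr0; last first.
  by move=> b /negbTE; rewrite eq_sym => ->; rewrite mul0r mulr0.
by rewrite mul1r -exprS.
Qed.

Lemma cvg_sum_seq (T : Type) (r : seq T) (f : T -> nat -> R[i]^o) (l : T -> R[i]^o) :
  (forall a, f a @ \oo --> l a) ->
  (fun N => \sum_(a <- r) f a N) @ \oo --> \sum_(a <- r) l a.
Proof.
move=> H; elim: r => [|a r IH].
  under eq_fun do rewrite big_nil.
  by rewrite big_nil; exact: cvg_cst.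
under eq_fun do rewrite big_cons.
by rewrite big_cons; apply: cvgD; [exact: H|exact: IH].
Qed.

Lemma kexp (I : finType) (P : I -> V -> V -> R[i]) (m : I -> nat) (tau : R) :
  specfam P ->
  is_mxexp ((('i * tau%:C) : R[i]^o) *: kmx (fun x y => \sum_a (m a)%:R * P a x y))
    (kmx (fun x y => \sum_a (cos (tau * (m a)%:R) +i* sin (tau * (m a)%:R)) * P a x y)).
Proof.
move=> sP.
have -> : (('i * tau%:C) : R[i]^o) *: kmx (fun x y => \sum_a (m a)%:R * P a x y) =
    kmx (fun x y => \sum_a ('i * (tau * (m a)%:R)%:C) * P a x y).
  apply/matrixP => i j; rewrite !mxE mulr_sumr; apply: eq_bigr => a _.
  by rewrite rmorphM /= rmorph_nat; ring.
rewrite /is_mxexp.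
have E : forall N, \sum_(k < N) (k`!%:R)^-1 *:
      mxpow (kmx (fun x y => \sum_a ('i * (tau * (m a)%:R)%:C) * P a x y)) k =
    kmx (fun x y => \sum_a expS ('i * (tau * (m a)%:R)%:C) N * P a x y).
  move=> N; under eq_bigr do rewrite kpow //.
  apply/matrixP => i j; rewrite summxE !mxE.
  under eq_bigr do rewrite !mxE mulr_sumr.
  rewrite exchange_big /=; apply: eq_bigr => a _; rewrite /expS mulr_suml.
  by apply: eq_bigr => k _; rewrite mulrA.
under eq_fun do rewrite E.
apply: mx_cvg_entry => i j.
under eq_fun do rewrite mxE.
rewrite mxE; apply: cvg_sum_seq => a; apply: cvgMl.
exact: expS_cvg.
Qed.
End Kernels.



Section Graphs.
Variable R : realType.

Definition lapk (G : graph) (k : nat) : vert G -> vert G -> R[i] :=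
  fun x y => kdelta R x y * k%:R - (adj x y)%:R.
Arguments lapk : clear implicits.
Definition regular (G : graph) k := forall x : vert G, #|[set y | adj x y]| = k.

Lemma laplacian_kmx G k : regular G k -> laplacian R G = kmx (lapk G k).
Proof.
move=> Hk; apply/matrixP => i j; rewrite !mxE /lapk /kdelta (inj_eq enum_val_inj).
by case: eqP => [->|_]; rewrite ?Hk /= ?mul1r ?mul0r.
Qed.

Definition goodG (G : graph) k := regular G k /\
  exists (I : finType) (P : I -> vert G -> vert G -> R[i]) (m : I -> nat),
    specfam P /\ (forall a, ~~ odd (m a)) /\
    (forall x y, lapk G k x y = \sum_a (m a)%:R * P a x y).

Lemma card_cset (T : finType) (p : pred T) : #|[set y | p y]| = #|p|.
Proof. by apply: eq_card => y; apply/idP/idP; rewrite in_setE. Qed.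

Lemma goodK n : (2 <= n)%N -> ~~ odd n -> goodG (K n) n.-1.
Proof.
move=> n2 ne; split.
  move=> x; rewrite card_cset.
  have := cardC1 x; rewrite card_ord => <-.
  by apply: eq_card => y; rewrite /= /Kadj !inE eq_sym.
have nz : (n%:R : R[i]) != 0 by rewrite pnatr_eq0 -lt0n (leq_trans _ n2).
have sc : forall a : R[i], \sum_(z : vert (K n)) a = n%:R * a.
  by move=> a; rewrite sumr_const card_ord mulr_natl.
exists bool, (fun b (x y : 'I_n) => if b then kdelta R x y - (n%:R)^-1 else (n%:R)^-1),
  (fun b => if b then n else 0%N).
split; [split|split].
- move=> [] [] x y /=; rewrite /kmul.
  + under eq_bigr do rewrite mulrBl !mulrBr.
    rewrite !sumrB (sum_deltal (fun z => kdelta R z y)).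
    rewrite (sum_deltal (fun _ => (n%:R)^-1)) (sum_deltar (fun _ => (n%:R)^-1)) sc.
    by field.
  + under eq_bigr do rewrite mulrBl.
    rewrite sumrB (sum_deltal (fun _ => (n%:R)^-1)) sc.
    by field.
  + under eq_bigr do rewrite mulrBr.
    rewrite sumrB (sum_deltar (fun _ => (n%:R)^-1)) sc.
    by field.
  + by rewrite sc; field.
- by move=> x y; rewrite big_bool /= subrK.
- by case.
- move=> x y; rewrite big_bool /= mul0r addr0 /lapk /= /Kadj.
  have -> : (n.-1%:R : R[i]) = n%:R - 1.
    by rewrite -subn1 natrB // (leq_trans _ n2).
  by rewrite /kdelta; case: (x == y) => /=; field.
Qed.

Lemma card_sum (T : finType) (p : pred T) : #|p| = (\sum_y (p y : nat))%N.
Proof.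
rewrite -sum1_card big_mkcond /=; apply: eq_bigr => y _.
by rewrite unfold_in; case: (p y).
Qed.

Lemma sum_pair (T1 T2 : finType) (F : T1 -> T2 -> R[i]) :
  \sum_(p : T1 * T2) F p.1 p.2 = \sum_a \sum_b F a b.
Proof. by rewrite pair_bigA. Qed.

Lemma kdelta_pair (T1 T2 : finType) (x y : T1 * T2) :
  kdelta R x y = kdelta R x.1 y.1 * kdelta R x.2 y.2.
Proof.
case: x y => [x1 x2] [y1 y2]; rewrite /kdelta /= xpair_eqE.
by case: (x1 == y1); case: (x2 == y2); rewrite /= ?mulr1 ?mulr0.
Qed.

Lemma cart_adjE (G H : graph) (x y : vert (cart G H)) :
  ((cart_adj x y)%:R : R[i]) =
  (adj x.1 y.1)%:R * kdelta R x.2 y.2 + kdelta R x.1 y.1 * (adj x.2 y.2)%:R.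
Proof.
move: x y => [x1 x2] [y1 y2]; rewrite /cart_adj /kdelta /=.
case: (x1 =P y1) => [<-|_]; rewrite ?adj_irr /= ?mul0r ?mul1r ?add0r ?addr0 //.
by rewrite orbF; case: (adj x1 y1); case: (x2 == y2); rewrite /= ?mulr1 ?mulr0 ?mul0r ?mul1r.
Qed.

Lemma good_cart G H k1 k2 : goodG G k1 -> goodG H k2 -> goodG (cart G H) (k1 + k2).
Proof.
move=> [rG HG] [rH HH].
case: HG => I1 [P1 [m1 [sP1 [e1 l1]]]]; case: sP1 => o1 s1.
case: HH => I2 [P2 [m2 [sP2 [e2 l2]]]]; case: sP2 => o2 s2.
split.
  move=> [x1 x2]; rewrite card_cset card_sum.
  have := rG x1; have := rH x2; rewrite !card_cset !card_sum => <- <-.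
  rewrite -(pair_bigA _ (fun y1 y2 =>
     (((adj x1 y1 && (x2 == y2)) || ((x1 == y1) && adj x2 y2)) : nat))) /=.
  have E : forall y1, (\sum_y2 (((adj x1 y1 && (x2 == y2)) || ((x1 == y1) && adj x2 y2)) : nat)
     = adj x1 y1 + (x1 == y1) * \sum_y2 (adj x2 y2 : nat))%N.
    move=> y1; case: (x1 =P y1) => [<-|ne].
      rewrite adj_irr mul1n add0n; apply: eq_bigr => y2 _; by [].
    rewrite mul0n addn0; case: (boolP (adj x1 y1)) => a1 /=.
      rewrite (bigD1 x2) //= eqxx big1 ?addn0 // => y2 /negbTE.
      by rewrite eq_sym => ->.
    by rewrite big1.
  rewrite (eq_bigr _ (fun y1 _ => E y1)) big_split /=; congr addn.
  rewrite (bigD1 x1) //= eqxx mul1n [X in (_ + X)%N]big1 ?addn0 // => y1 /negbTE.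
  by rewrite eq_sym => ->.
exists (I1 * I2)%type,
  (fun ab (x y : vert (cart G H)) => P1 ab.1 x.1 y.1 * P2 ab.2 x.2 y.2),
  (fun ab => m1 ab.1 + m2 ab.2)%N.
split; [split|split].
- move=> [a1 a2] [b1 b2] [x1 x2] [y1 y2] /=; rewrite /kmul.
  rewrite (sum_pair (fun z1 z2 =>
     P1 a1 x1 z1 * P2 a2 x2 z2 * (P1 b1 z1 y1 * P2 b2 z2 y2))).
  under eq_bigr do under eq_bigr do rewrite mulrACA.
  rewrite -big_distrlr /= -/(kmul (P1 a1) (P1 b1) x1 y1) -/(kmul (P2 a2) (P2 b2) x2 y2).
  rewrite o1 o2 xpair_eqE.
  by case: (a1 == b1); case: (a2 == b2); rewrite /= ?mul1r ?mul0r ?mulr0.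
- move=> [x1 x2] [y1 y2] /=.
  rewrite (sum_pair (fun a b => P1 a x1 y1 * P2 b x2 y2)) -big_distrlr /= s1 s2.
  by rewrite kdelta_pair.
- by move=> [a b] /=; rewrite oddD (negbTE (e1 a)) (negbTE (e2 b)).
- move=> [x1 x2] [y1 y2] /=.
  rewrite (sum_pair (fun a b => (m1 a + m2 b)%:R * (P1 a x1 y1 * P2 b x2 y2))).
  have E : forall a b, (m1 a + m2 b)%:R * (P1 a x1 y1 * P2 b x2 y2) =
      ((m1 a)%:R * P1 a x1 y1) * P2 b x2 y2 + P1 a x1 y1 * ((m2 b)%:R * P2 b x2 y2) :> R[i].
    by move=> a b; rewrite natrD; ring.
  under eq_bigr do under eq_bigr do rewrite E.
  under eq_bigr do rewrite big_split.
  rewrite big_split -!big_distrlr /= -l1 s2 s1 -l2.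
  rewrite /lapk kdelta_pair cart_adjE /= natrD.
  ring.
Qed.
End Graphs.


Lemma big_optionE (R : nmodType) (I : finType) (F : option I -> R) :
  \sum_a F a = F None + \sum_a F (Some a).
Proof.
have -> : \sum_a F (Some a) = \sum_(a <- map Some (index_enum I)) F a.
  by rewrite big_map.
transitivity (\sum_(a <- None :: map Some (index_enum I)) F a); last first.
  by rewrite big_cons.
apply: perm_big; apply: uniq_perm.
- exact: index_enum_uniq.
- rewrite /= map_inj_uniq ?index_enum_uniq ?andbT;
    try (by move=> a b []); try (by apply/mapP => -[]).
- case=> [a|]; rewrite mem_index_enum in_cons //= mem_map ?mem_index_enum //.
Qed.

Section Blow.
Variable R : realType.

Lemma sum_pair2 (T1 T2 : finType) (F : T1 * T2 -> R[i]) :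
  \sum_p F p = \sum_a \sum_b F (a, b).
Proof. by rewrite pair_bigA; apply: eq_bigr => -[]. Qed.

Lemma kmul_tensor (T1 T2 : finType) (A A' : T1 -> T1 -> R[i]) (B B' : T2 -> T2 -> R[i])
   (p q : T1 * T2) :
  kmul (fun p q => A p.1 q.1 * B p.2 q.2) (fun p q => A' p.1 q.1 * B' p.2 q.2) p q =
  kmul A A' p.1 q.1 * kmul B B' p.2 q.2.
Proof.
rewrite /kmul sum_pair2 /=.
under eq_bigr do under eq_bigr do rewrite mulrACA.
by rewrite -big_distrlr.
Qed.

Lemma sum_I2 (F : 'I_2 -> R[i]) : \sum_l F l = F ord0 + F ord_max.
Proof.
rewrite big_ord_recl big_ord_recl big_ord0 addr0; congr (_ + F _); exact: val_inj.
Qed.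

Lemma I2_cases (l : 'I_2) : l = ord0 \/ l = ord_max.
Proof. by case: l => [[|[|n]] Hl]; [left|right|]; try apply: val_inj. Qed.

Definition sg (l l' : 'I_2) : R[i] := if l == l' then 2^-1 else - 2^-1.

Lemma two_nz : (2 : R[i]) != 0. Proof. by rewrite pnatr_eq0. Qed.

Lemma kmul_cc (l l' : 'I_2) :
  kmul (fun _ _ => (2^-1 : R[i])) (fun _ _ => 2^-1) l l' = 2^-1.
Proof. rewrite /kmul sum_I2; have := two_nz; by move=> ?; field. Qed.

Lemma kmul_cs (l l' : 'I_2) : kmul (fun _ _ => (2^-1 : R[i])) sg l l' = 0.
Proof.
by rewrite /kmul sum_I2 /sg; case: (I2_cases l') => ->; rewrite /= mulrN ?subrr ?addNr.
Qed.

Lemma kmul_sc (l l' : 'I_2) : kmul sg (fun _ _ => (2^-1 : R[i])) l l' = 0.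
Proof.
by rewrite /kmul sum_I2 /sg; case: (I2_cases l) => ->; rewrite /= mulNr ?subrr ?addNr.
Qed.

Lemma kmul_ss (l l' : 'I_2) : kmul sg sg l l' = sg l l'.
Proof.
have := two_nz => nz.
rewrite /kmul sum_I2 /sg; case: (I2_cases l) => ->; case: (I2_cases l') => -> /=;
  by field.
Qed.

Lemma kmul_dl (V : finType) (B : V -> V -> R[i]) x y : kmul (@kdelta R V) B x y = B x y.
Proof. exact: (sum_deltal (fun z => B z y)). Qed.

Lemma kmul_dr (V : finType) (B : V -> V -> R[i]) x y : kmul B (@kdelta R V) x y = B x y.
Proof. exact: (sum_deltar (fun z => B x z)). Qed.

Lemma cs_pi (j : nat) :
  cos ((pi : R) / 2 * (j + j)%:R) = (-1) ^+ j /\ sin ((pi : R) / 2 * (j + j)%:R) = 0.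
Proof.
have -> : pi / 2 * (j + j)%:R = 0 + pi *+ j :> R.
  by rewrite add0r -mulr_natr natrD; field.
rewrite (alternatingn (@cosDpi R)) (alternatingn (@sinDpi R)) cos0 sin0.
by rewrite mulr1 mulr0.
Qed.

Lemma kmx_evec (G : graph) (f : vert G -> vert G -> R[i]) a :
  kmx f *m evec R a = \matrix_(i, j) f (enum_val i) a.
Proof.
apply/matrixP => i j; rewrite !mxE (bigD1 (enum_rank a)) //= !mxE eqxx (ord1 j) eqxx /=.
rewrite mulr1 enum_rankK big1 ?addr0 // => r /negbTE ne.
by rewrite !mxE ne mulr0.
Qed.

Lemma blow_pst (G : graph) k : @goodG R G k -> odd k -> forall u : vert G,
  @lap_pst R (blowup2 G) (ord0, u) (ord_max, u).
Proof.
move=> [rG HG] ok u; case: HG => I [P [m [sP [em lP]]]]; case: sP => o s.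
have nz := two_nz.
pose A (c : option I) : 'I_2 -> 'I_2 -> R[i] :=
  if c is Some _ then (fun _ _ => 2^-1) else sg.
pose B (c : option I) : vert G -> vert G -> R[i] :=
  if c is Some a then P a else @kdelta R (vert G).
pose P' (c : option I) (p q : vert (blowup2 G)) := A c p.1 q.1 * B c p.2 q.2.
pose m' (c : option I) := if c is Some a then (m a + m a)%N else (k + k)%N.
have rB : regular (blowup2 G) (k + k).
  move=> [l x]; rewrite card_cset card_sum.
  have := rG x; rewrite card_cset card_sum => <-.
  rewrite -(pair_bigA _ (fun (_ : 'I_2) y => (adj x y : nat))) /=.
  by rewrite big_ord_recl big_ord_recl big_ord0 addn0.
have sP' : specfam P'.
  split.
  - move=> a b p q; rewrite /P' kmul_tensor.
    case: a => [a|]; case: b => [b|] /=;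
      rewrite ?kmul_cc ?kmul_cs ?kmul_sc ?kmul_ss ?o ?kmul_dl ?kmul_dr.
    + rewrite (inj_eq (@Some_inj _)); exact: mulrCA.
    + by rewrite !mul0r.
    + by rewrite !mul0r.
    + by rewrite mul1r.
  - move=> [l x] [l' y]; rewrite big_optionE /P' /= -mulr_sumr s kdelta_pair /=.
    rewrite -mulrDl; congr (_ * _).
    by rewrite /sg /kdelta; case: (I2_cases l) => ->; case: (I2_cases l') => -> /=; field.
have lP' : forall p q, @lapk R (blowup2 G) (k + k) p q = \sum_c (m' c)%:R * P' c p q.
  move=> [l x] [l' y]; rewrite big_optionE /=.
  have -> : \sum_a (m a + m a)%:R * (2^-1 * P a x y) = \sum_a (m a)%:R * P a x y.
    by apply: eq_bigr => a _; rewrite natrD; field.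
  rewrite -lP /lapk kdelta_pair /P' /= /blow_adj /=.
  rewrite /sg /kdelta; case: (I2_cases l) => ->; case: (I2_cases l') => -> /=;
    rewrite natrD; field; done.
rewrite /lap_pst; exists ((pi : R) / 2); split; first by apply: divr_gt0; [exact: pi_gt0|].
exists 1, (kmx (fun p q => \sum_c
  (cos (pi / 2 * (m' c)%:R) +i* sin (pi / 2 * (m' c)%:R)) * P' c p q)).
split.
  rewrite (laplacian_kmx R rB).
  have -> : @lapk R (blowup2 G) (k + k) = (fun p q => \sum_c (m' c)%:R * P' c p q).
    by apply/funext => p; apply/funext => q; exact: lP'.
  exact: kexp sP'.
rewrite kmx_evec; apply/matrixP => i j; rewrite !mxE (ord1 j) eqxx andbT mul1r.
rewrite -(inj_eq enum_val_inj) enum_rankK.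
move: (enum_val i) => [l x].
rewrite big_optionE /= (cs_pi k).1 (cs_pi k).2 -signr_odd ok expr1.
under eq_bigr => a _ do rewrite (cs_pi (m a)).1 (cs_pi (m a)).2 -signr_odd (negbTE (em a)) expr0.
rewrite complexr0 rmorphN1.
under eq_bigr => a _ do rewrite complexr0 rmorph1 mul1r.
rewrite -mulr_sumr s xpair_eqE /P' /= /sg /kdelta.
by case: (I2_cases l) => -> /=; case: (x == u) => /=; field.
Qed.
End Blow.

Local Close Scope classical_set_scope.
Local Close Scope complex_scope.


Lemma good_prodK (R : realType) n s :
  all (fun n => (2 <= n)%N && ~~ odd n) (n :: s) ->
  exists k, odd k = odd (size s).+1 /\ @goodG R (prodK n s) k.
Proof.
elim: s n => [|m s IH] n /=.
  rewrite andbT => /andP[n2 ne]; exists n.-1; split; last exact: goodK.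
  by case: n n2 ne => [|n'] //= _; rewrite negbK.
move=> /andP[/andP[n2 ne] H].
have [k [ok gk]] := IH m H.
exists (n.-1 + k)%N; split; last exact: good_cart (goodK R n2 ne) gk.
rewrite oddD ok; case: n n2 ne => [|n'] //= _; rewrite negbK => ->.
by [].
Qed.

Theorem corollary6 (R : realType) :
  (forall (ns : seq nat), (2 <= size ns)%N -> odd (size ns) ->
     all (fun n => (2 <= n)%N && ~~ odd n) ns ->
     forall u : vert (cartK ns),
       @lap_pst R (blowup2 (cartK ns)) (ord0, u) (ord_max, u)) /\
  (forall d q : nat, (2 <= d)%N -> odd d -> (2 <= q)%N -> ~~ odd q ->
     forall u : vert (hamming d q),
       @lap_pst R (blowup2 (hamming d q)) (ord0, u) (ord_max, u)).
Proof.
have part1 : forall (ns : seq nat), (2 <= size ns)%N -> odd (size ns) ->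
     all (fun n => (2 <= n)%N && ~~ odd n) ns ->
     forall u : vert (cartK ns),
       @lap_pst R (blowup2 (cartK ns)) (ord0, u) (ord_max, u).
  case=> [|n s] //= _ os H u.
  have [k [ok gk]] := good_prodK R H.
  apply: (blow_pst gk); by rewrite ok.
split; first exact: part1.
move=> d q d2 od q2 eq u.
apply: (part1 (nseq d q)); rewrite ?size_nseq //.
by rewrite all_nseq q2 eq orbT.
Qed.
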